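(* Let $\mathcal{D}$ be a set of discounting functions. For every $\mathrm{LTL}^{\mathrm{disc}}[\mathcal{D}]$ formula $\varphi$ over $AP$ and every threshold $v\in[0,1]$, there exists an alternating weak automaton $\mathcal{A}_{\varphi,v}$ over the alphabet $2^{AP}$ such that for every computation $\pi$: (1) if $[\![\pi,\varphi]\!]>v$, then $\mathcal{A}_{\varphi,v}$ accepts $\pi$; (2) if $\mathcal{A}_{\varphi,v}$ accepts $\pi$ and $\pi$ is a lasso computation, then $[\![\pi,\varphi]\!]>v$.
   Context: Let $AP$ be a finite set of atomic propositions. A computation is an infinite word $\pi=\pi_0\pi_1\cdots\in(2^{AP})^\omega$, $\pi^i=\pi_i\pi_{i+1}\cdots$; a lasso computation is one of the form $u\cdot w^\omega$ with $u,w\in(2^{AP})^*$, $w\neq\epsilon$. A discounting function is a strictly decreasing $\eta:\mathbb{N}\to[0,1]$ with $\lim_{i\to\infty}\eta(i)=0$. $\mathrm{LTL}^{\mathrm{disc}}[\mathcal{D}]$ formulas: $\varphi ::= \mathtt{True}\mid p\mid\neg\varphi\mid\varphi\vee\varphi\mid\mathsf{X}\varphi\mid\varphi\,\mathsf{U}\,\varphi\mid\varphi\,\mathsf{U}_\eta\,\varphi$ ($p\in AP$, $\eta\in\mathcal{D}$), with values: $[\![\pi,\mathtt{True}]\!]=1$; $[\![\pi,p]\!]=1$ if $p\in\pi_0$, else $0$; $[\![\pi,\neg\varphi]\!]=1-[\![\pi,\varphi]\!]$; $[\![\pi,\varphi\vee\psi]\!]=\max\{[\![\pi,\varphi]\!],[\![\pi,\psi]\!]\}$;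 $[\![\pi,\mathsf{X}\varphi]\!]=[\![\pi^1,\varphi]\!]$; $[\![\pi,\varphi\,\mathsf{U}\,\psi]\!]=\sup_{i\ge0}\min\{[\![\pi^i,\psi]\!],\min_{0\le j<i}[\![\pi^j,\varphi]\!]\}$; $[\![\pi,\varphi\,\mathsf{U}_\eta\,\psi]\!]=\sup_{i\ge0}\min\{\eta(i)[\![\pi^i,\psi]\!],\min_{0\le j<i}\eta(j)[\![\pi^j,\varphi]\!]\}$. An alternating B\''uchi automaton is $\mathcal{A}=\langle\Sigma,Q,q_{in},\delta,\alpha\rangle$ with finite alphabet $\Sigma$, finite state set $Q$, initial state $q_{in}$, transition function $\delta:Q\times\Sigma\to\mathcal{B}^+(Q)$ (positive Boolean formulas over $Q$, including $\mathtt{True},\mathtt{False}$) and accepting set $\alpha\subseteq Q$. A run on $w=\sigma_0\sigma_1\cdots$ is a DAG with nodes in $Q\times\mathbb{N}$, level $0$ being $\{q_{in}\}$, such that for each node $\langle q,l\rangle$ the set of its successors at level $l+1$ satisfies $\delta(q,\sigma_l)$; it is accepting if every infinite path visits $\alpha$ infinitely often, and $w$ is accepted if some run is accepting. The automaton is weak if $Q$ can be partitioned into sets $Q_1,\dots,Q_k$, each contained in or disjoint from $\alpha$, with a partial order on them such that transitions from a state in $Q_i$ only lead to states in sets $Q_j\le Q_i$. *)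

(* Defs.v *)
From HB Require Import structures.
From mathcomp Require Import all_boot all_order all_algebra.
From mathcomp Require Import boolp classical_sets reals.
Set Implicit Arguments. Unset Strict Implicit. Unset Printing Implicit Defensive.
Import Order.TTheory GRing.Theory Num.Theory.
Local Open Scope ring_scope.


Definition discounting (R : realType) (eta : nat -> R) : Prop :=
  (forall i, 0 <= eta i <= 1) /\
  (forall i j : nat, (i < j)%N -> eta j < eta i) /\
  (forall e : R, 0 < e -> exists N : nat, forall n : nat, (N <= n)%N -> `|eta n| < e).

Inductive ltl (R : realType) (AP : Type) : Type :=
| LTrue : ltl R AP
| LAtom : AP -> ltl R AP
| LNot : ltl R AP -> ltl R AP
| LOr : ltl R AP -> ltl R AP -> ltl R AP
| LNext : ltl R AP -> ltl R AP
| LUntil : ltl R AP -> ltl R AP -> ltl R AP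
| LUntilD : (nat -> R) -> ltl R AP -> ltl R AP -> ltl R AP.

Fixpoint in_disc (R : realType) (AP : Type) (D : set (nat -> R)) (phi : ltl R AP)
  : Prop :=
  match phi with
  | LTrue => True
  | LAtom _ => True
  | LNot f => in_disc D f
  | LOr f g => in_disc D f /\ in_disc D g
  | LNext f => in_disc D f
  | LUntil f g => in_disc D f /\ in_disc D g
  | LUntilD eta f g => D eta /\ in_disc D f /\ in_disc D g
  end.

Definition computation (AP : finType) := nat -> {set AP}.
Definition suffix (AP : finType) (pi : computation AP) (i : nat) : computation AP :=
  fun n => pi (i + n)%N.

(** Minimum over j < i; the empty minimum is 1 (all values lie in [0,1],
    so this is the same as imposing no constraint). *)
Definition minj (R : realType) (i : nat) (F : nat -> R) : R :=
  \big[Order.min/1]_(j < i) F j.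

Fixpoint value (R : realType) (AP : finType) (phi : ltl R AP) (pi : computation AP) : R :=
  match phi with
  | LTrue => 1
  | LAtom p => if p \in pi 0%N then 1 else 0
  | LNot f => 1 - value f pi
  | LOr f g => Num.max (value f pi) (value g pi)
  | LNext f => value f (suffix pi 1)
  | LUntil f g =>
      sup (range (fun i : nat =>
        Order.min (value g (suffix pi i))
                  (minj i (fun j => value f (suffix pi j)))))
  | LUntilD eta f g =>
      sup (range (fun i : nat =>
        Order.min (eta i * value g (suffix pi i))
                  (minj i (fun j => eta j * value f (suffix pi j)))))
  end.

Definition lasso (AP : finType) (pi : computation AP) : Prop :=
  exists (u w : seq {set AP}), w <> [::] /\
    forall n : nat, pi n = if (n < size u)%N then nth finset.set0 u n
                           else nth finset.set0 w ((n - size u) %% size w).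

Inductive pbf (Q : Type) : Type :=
| PTrue : pbf Q
| PFalse : pbf Q
| PAtom : Q -> pbf Q
| PAnd : pbf Q -> pbf Q -> pbf Q
| POr : pbf Q -> pbf Q -> pbf Q.

Fixpoint pbf_sat (Q : finType) (S : {set Q}) (b : pbf Q) : Prop :=
  match b with
  | PTrue => True
  | PFalse => False
  | PAtom q => q \in S
  | PAnd b1 b2 => pbf_sat S b1 /\ pbf_sat S b2
  | POr b1 b2 => pbf_sat S b1 \/ pbf_sat S b2
  end.

Fixpoint pbf_atoms (Q : Type) (b : pbf Q) (q : Q) : Prop :=
  match b with
  | PTrue => False
  | PFalse => False
  | PAtom q' => q = q'
  | PAnd b1 b2 => pbf_atoms b1 q \/ pbf_atoms b2 q
  | POr b1 b2 => pbf_atoms b1 q \/ pbf_atoms b2 q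
  end.

Record aba (Sigma Q : finType) := ABA {
  q_in : Q;
  delta : Q -> Sigma -> pbf Q;
  acc : {set Q}
}.

(** A run DAG on word w: level l has node set lvl l (lvl 0 = {q_in});
    succ l q is the set of successors at level l+1 of node <q,l>; the nodes
    of level l+1 are exactly the successors of nodes of level l; for every
    node <q,l> the successor set satisfies delta(q, w_l). *)
Definition is_run (Sigma Q : finType) (A : aba Sigma Q) (w : nat -> Sigma)
  (lvl : nat -> {set Q}) (succ : nat -> Q -> {set Q}) : Prop :=
  lvl 0%N = [set q_in A] /\
  (forall l : nat, lvl l.+1 = \bigcup_(q in lvl l) succ l q) /\
  (forall (l : nat) (q : Q), q \in lvl l -> pbf_sat (succ l q) (delta A q (w l))).

Definition run_accepting (Sigma Q : finType) (A : aba Sigma Q)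
  (succ : nat -> Q -> {set Q}) : Prop :=
  forall p : nat -> Q, p 0%N = q_in A -> (forall l, p l.+1 \in succ l (p l)) ->
    forall N : nat, exists l : nat, (N <= l)%N /\ p l \in acc A.

Definition accepts (Sigma Q : finType) (A : aba Sigma Q) (w : nat -> Sigma) : Prop :=
  exists lvl succ, is_run A w lvl succ /\ run_accepting A succ.

(** Weakness: a partition of Q into blocks Q_1..Q_k (block : Q -> 'I_k), each
    contained in or disjoint from acc, with a partial order le on blocks such
    that transitions from a block only lead to blocks below or equal to it. *)
Definition weak (Sigma Q : finType) (A : aba Sigma Q) : Prop :=
  exists (k : nat) (block : Q -> 'I_k) (le : 'I_k -> 'I_k -> Prop),
    (forall i, le i i) /\
    (forall i j, le i j -> le j i -> i = j) /\
    (forall i j m, le i j -> le j m -> le i m) /\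
    (forall i : 'I_k, [set q | block q == i] \subset acc A \/
                      [disjoint [set q | block q == i] & acc A]) /\
    (forall (q : Q) (s : Sigma) (q' : Q), pbf_atoms (delta A q s) q' ->
       le (block q') (block q)).

(* Main.v *)
Require Import Defs.
From HB Require Import structures.
From mathcomp Require Import all_boot all_order all_algebra.
From mathcomp Require Import boolp classical_sets reals.
From mathcomp Require Import zify lra.
Import Order.TTheory GRing.Theory Num.Theory.
Set Implicit Arguments. Unset Strict Implicit. Unset Printing Implicit Defensive.


Section Aut.
Variable AP : finType.
Local Notation comp := (computation AP).
Local Notation Sig := {set AP}.
Local Notation sfx := Defs.suffix.

Definition eper (pi : comp) := exists K p, (0 < p)%N /\
  forall n, (K <= n)%N -> pi (n + p)%N = pi n.

Lemma suffixA (pi : comp) a b : sfx (sfx pi a) b = sfx pi (a + b).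
Proof. by apply: funext => n; rewrite /Defs.suffix addnA. Qed.

Lemma suffix0 (pi : comp) : sfx pi 0 = pi.
Proof. by apply: funext => n; rewrite /Defs.suffix add0n. Qed.

Lemma eper_suffix pi i : eper pi -> eper (sfx pi i).
Proof.
case=> K [p [p0 H]]; exists K, p; split=> // n Kn.
by rewrite /Defs.suffix addnA H //; apply: leq_trans Kn (leq_addl _ _).
Qed.

Fixpoint pbf_map (Q1 Q2 : Type) (f : Q1 -> Q2) (b : pbf Q1) : pbf Q2 :=
  match b with
  | PTrue => PTrue _
  | PFalse => PFalse _
  | PAtom q => PAtom (f q)
  | PAnd b1 b2 => PAnd (pbf_map f b1) (pbf_map f b2)
  | POr b1 b2 => POr (pbf_map f b1) (pbf_map f b2)
  end.

Lemma pbf_sat_mono (Q : finType) (S S' : {set Q}) b :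
  S \subset S' -> pbf_sat S b -> pbf_sat S' b.
Proof.
move=> sS; elim: b => //=.
- by move=> q /= h; apply: (fintype.subsetP sS).
- by move=> b1 IH1 b2 IH2 [h1 h2]; split; [apply: IH1|apply: IH2].
- by move=> b1 IH1 b2 IH2 [h1|h2]; [left; apply: IH1|right; apply: IH2].
Qed.

Lemma pbf_sat_map (Q1 Q2 : finType) (f : Q1 -> Q2) S b :
  pbf_sat S (pbf_map f b) <-> pbf_sat (f @^-1: S) b.
Proof.
elim: b => //=.
- by move=> q; rewrite inE.
- by move=> b1 IH1 b2 IH2; rewrite IH1 IH2.
- by move=> b1 IH1 b2 IH2; rewrite IH1 IH2.
Qed.

Lemma pbf_atoms_map (Q1 Q2 : Type) (f : Q1 -> Q2) b q' :
  pbf_atoms (pbf_map f b) q' -> exists q, q' = f q /\ pbf_atoms b q.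
Proof.
elim: b => //=.
- by move=> q ->; exists q.
- by move=> b1 IH1 b2 IH2 [/IH1|/IH2] [q [-> h]]; exists q; split=> //; [left|right].
- by move=> b1 IH1 b2 IH2 [/IH1|/IH2] [q [-> h]]; exists q; split=> //; [left|right].
Qed.

Lemma pbf_atoms_map_f (Q1 Q2 : Type) (f : Q1 -> Q2) b q :
  pbf_atoms b q -> pbf_atoms (pbf_map f b) (f q).
Proof.
elim: b => //=.
- by move=> q' ->.
- by move=> b1 IH1 b2 IH2 [/IH1|/IH2]; [left|right].
- by move=> b1 IH1 b2 IH2 [/IH1|/IH2]; [left|right].
Qed.

Lemma pbf_sat_restrict (Q : finType) (S : {set Q}) b :
  pbf_sat S b -> pbf_sat [set q in S | `[< pbf_atoms b q >]] b.
Proof.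
elim: b => //=.
- by move=> q qS; rewrite inE qS /=; apply/asboolP.
- move=> b1 IH1 b2 IH2 [/IH1 h1 /IH2 h2]; split.
  + apply: pbf_sat_mono h1; apply/fintype.subsetP => x; rewrite !inE => /andP[-> /asboolP h].
    by apply/asboolP; left.
  + apply: pbf_sat_mono h2; apply/fintype.subsetP => x; rewrite !inE => /andP[-> /asboolP h].
    by apply/asboolP; right.
- move=> b1 IH1 b2 IH2 [/IH1 h1|/IH2 h2]; [left|right].
  + apply: pbf_sat_mono h1; apply/fintype.subsetP => x; rewrite !inE => /andP[-> /asboolP h].
    by apply/asboolP; left.
  + apply: pbf_sat_mono h2; apply/fintype.subsetP => x; rewrite !inE => /andP[-> /asboolP h].
    by apply/asboolP; right.
Qed.

Record good (Q : finType) (A : aba Sig Q) (lab : Q -> comp -> Prop)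
  (rank : Q -> nat) (B : nat) (m : Q -> comp -> nat) : Prop := Good {
  g_rank_bd : forall q, (rank q < B)%N;
  g_rank : forall q s q', pbf_atoms (delta A q s) q' -> q' = q \/ (rank q' < rank q)%N;
  g_fwd : forall q pi, lab q pi -> exists S, pbf_sat S (delta A q (pi 0%N)) /\
     forall q', q' \in S -> lab q' (sfx pi 1) /\
        (q' = q -> q \notin acc A -> (m q (sfx pi 1) < m q pi)%N);
  g_bi : forall q pi S, q \notin acc A -> eper pi -> pbf_sat S (delta A q (pi 0%N)) ->
     (forall q', q' \in S -> pbf_atoms (delta A q (pi 0%N)) q' -> lab q' (sfx pi 1)) ->
     lab q pi;
  g_bc : forall q pi (X : nat -> Prop), q \in acc A -> eper pi ->
     (forall l, X l -> exists S, pbf_sat S (delta A q (pi l)) /\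
        forall q', q' \in S -> pbf_atoms (delta A q (pi l)) q' ->
          (q' = q -> X l.+1) /\ (q' <> q -> lab q' (sfx pi l.+1))) ->
     X 0%N -> lab q pi
}.

Section Good.
Variables (Q : finType) (A : aba Sig Q) (lab : Q -> comp -> Prop)
  (rank : Q -> nat) (B : nat) (m : Q -> comp -> nat).
Hypothesis G : good A lab rank B m.

Lemma good_back q pi S : eper pi -> pbf_sat S (delta A q (pi 0%N)) ->
  (forall q', q' \in S -> pbf_atoms (delta A q (pi 0%N)) q' -> lab q' (sfx pi 1)) ->
  lab q pi.
Proof.
move=> E sat hS; case: (boolP (q \in acc A)) => qa; last exact: (g_bi G qa E sat hS).
apply: (g_bc G (X := fun l => l = 0%N \/ lab q (sfx pi l))) => //; last by left.
move=> l [->|h].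
  exists S; split=> // q' q'S at0; split; first by move=> e; right; rewrite -e; apply: hS.
  by move=> _; apply: hS.
have [S' [sat' hS']] := g_fwd G h.
have e0 : sfx pi l 0%N = pi l by rewrite /Defs.suffix addn0.
rewrite e0 in sat'; exists S'; split=> // q' q'S _.
have [h1 _] := hS' q' q'S; rewrite suffixA addn1 in h1.
split; last by []. by move=> e; right; rewrite -e.
Qed.

Lemma good_accepts pi : lab (q_in A) pi -> accepts A pi.
Proof.
move=> H0.
have Fc : forall q l, {S : {set Q} | lab q (sfx pi l) ->
   pbf_sat S (delta A q (pi l)) /\ forall q', q' \in S ->
     pbf_atoms (delta A q (pi l)) q' /\ lab q' (sfx pi l.+1) /\
     (q' = q -> q \notin acc A -> (m q (sfx pi l.+1) < m q (sfx pi l))%N)}.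
  move=> q l; apply: cid.
  case: (pselect (lab q (sfx pi l))) => h; last by exists finset.set0.
  have [S [sat hS]] := g_fwd G h.
  have e0 : sfx pi l 0%N = pi l by rewrite /Defs.suffix addn0.
  rewrite e0 in sat.
  exists [set x in S | `[< pbf_atoms (delta A q (pi l)) x >]] => _.
  split; first exact: pbf_sat_restrict.
  move=> q'; rewrite inE => /andP[q'S /asboolP at0]; split=> //.
  by have := hS q' q'S; rewrite suffixA addn1.
pose succ l q := sval (Fc q l).
have succP : forall l q, lab q (sfx pi l) -> _ := fun l q => svalP (Fc q l).
pose lvl := fix lvl l := if l is l'.+1 then \bigcup_(q in lvl l') succ l' q
                         else [set q_in A].
have Lab : forall l q, q \in lvl l -> lab q (sfx pi l).
  elim=> [|l IH] q /=; first by move/set1P => ->; rewrite suffix0.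
  case/bigcupP => q0 /IH h0 qS.
  by have [_ /(_ q qS) [_ []]] := succP _ _ h0.
exists lvl, succ; split.
  split=> //; split=> // l q /Lab h; by have [] := succP _ _ h.
move=> p p0 step N.
have pl : forall l, p l \in lvl l.
  elim=> [|l IH]; first by rewrite p0 /=; apply/set1P.
  by apply/bigcupP; exists (p l) => //; apply: step.
have info : forall l, pbf_atoms (delta A (p l) (pi l)) (p l.+1) /\
   (p l.+1 = p l -> p l \notin acc A ->
     (m (p l) (sfx pi l.+1) < m (p l) (sfx pi l))%N).
  move=> l; have [_ /(_ _ (step l)) [h1 [_ h3]]] := succP _ _ (Lab _ _ (pl l)).
  by split.
case: (pselect (exists l, (N <= l)%N /\ p l \in acc A)) => // nH; exfalso.
have rk : forall L k, p (L + k)%N = p L \/ (rank (p (L + k)%N) < rank (p L))%N.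
  move=> L; elim=> [|k IH]; first by rewrite addn0; left.
  have [h _] := info (L + k)%N.
  rewrite addnS; case: (g_rank G h) => [->|lt]; first by [].
  right; case: IH => [<-|lt2] //; exact: ltn_trans lt lt2.
have ev : forall n L, (N <= L)%N -> (rank (p L) < n)%N ->
   exists L', (L <= L')%N /\ forall k, p (L' + k)%N = p L'.
  elim=> [//|n IH] L NL rL.
  case: (pselect (exists k, p (L + k)%N <> p L)) => [[k hk]|hk].
    have [//|lt] := rk L k.
    have [L' [le1 h]] := IH (L + k)%N (leq_trans NL (leq_addr _ _))
       (leq_trans lt (rL)).
    by exists L'; split=> //; apply: leq_trans le1; apply: leq_addr.
  exists L; split=> // k; case: (pselect (p (L + k)%N = p L)) => // h.
  by exfalso; apply: hk; exists k.
have [L [NL hL]] := ev (rank (p N)).+1 N (leqnn _) (leqnn _).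
have nacc : p L \notin acc A.
  by apply/negP => h; apply: nH; exists L; split.
have dec : forall k, (m (p L) (sfx pi (L + k)%N) + k <= m (p L) (sfx pi L))%N.
  elim=> [|k IH]; first by rewrite !addn0.
  have [_ h] := info (L + k)%N.
  have e1 := hL k; have e2 := hL k.+1.
  rewrite addnS in e2; rewrite e1 e2 in h.
  have lt := h erefl nacc; have e3 : (L + k.+1 = (L+k).+1)%N by rewrite addnS.
  rewrite e3; lia.
have := dec (m (p L) (sfx pi L)).+1.
by rewrite addnS ltnNge leq_addl.
Qed.

Lemma good_sound pi : eper pi -> accepts A pi -> lab (q_in A) pi.
Proof.
move=> E [lvl [succ [[L0 [Ls Ld]] Acc]]].
have sub : forall l q q', q \in lvl l -> q' \in succ l q -> q' \in lvl l.+1.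
  by move=> l q q' ql q'S; rewrite Ls; apply/bigcupP; exists q.
have path : forall l q, q \in lvl l -> exists p : nat -> Q, p 0%N = q_in A /\ p l = q /\
    forall k, (k < l)%N -> p k.+1 \in succ k (p k).
  elim=> [|l IH] q.
    by rewrite L0 => /set1P ->; exists (fun _ => q_in A).
  rewrite Ls => /bigcupP [q0 /IH [p [p0 [pl hp]]] qS].
  exists (fun k => if (k <= l)%N then p k else q); split; first by rewrite leq0n.
  split; first by rewrite ltnn.
  move=> k; rewrite ltnS => kl; rewrite kl; case: (ltngtP k l) kl => //.
    by move=> lt _; apply: hp.
  by move=> -> _; rewrite pl.
have main : forall n q, (rank q < n)%N -> forall l, q \in lvl l -> lab q (sfx pi l).
  elim=> [//|n IHn] q rq.
  have IHq : forall q' l, q' \in lvl l -> (rank q' < rank q)%N -> lab q' (sfx pi l).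
    by move=> q' l h lt; apply: IHn h; apply: leq_trans lt _.
  move=> l ql.
  case: (boolP (q \in acc A)) => qa.
    apply: (g_bc G (X := fun k => q \in lvl (l + k)%N)) => //.
    - exact: eper_suffix.
    - move=> k hk; exists (succ (l + k)%N q); split; first exact: Ld.
      move=> q' q'S at0; split.
        by move=> e; rewrite addnS; apply: (sub _ _ _ hk); rewrite e in q'S.
      move=> ne; have [e|lt] := g_rank G at0; first by [].
      by rewrite suffixA; apply: IHq lt; rewrite addnS; apply: (sub _ _ _ hk q'S).
    - by rewrite addn0.
  case: (pselect (exists k, q \notin succ (l + k)%N q)) => [ex|nex]; last first.
    exfalso; have [p [p0 [pl hp]]] := path l q ql.
    pose p' k := if (k <= l)%N then p k else q.
    have hp0 : p' 0%N = q_in A by rewrite /p' leq0n.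
    have hst : forall k, p' k.+1 \in succ k (p' k).
      rewrite /p' => k; case: (ltngtP k l) => [lt|gt|->].
      + by apply: hp.
      + case: (pselect (q \in succ k q)) => // h; exfalso; apply: nex.
        exists (k - l)%N; rewrite subnKC; [by apply/negP | exact: ltnW gt].
      + rewrite pl; case: (pselect (q \in succ l q)) => // h.
        exfalso; apply: nex; exists 0%N; rewrite addn0; by apply/negP.
    have [l' [ll' ha]] := Acc p' hp0 hst l.
    move: ha; rewrite /p'; case: ifP => h.
      have -> : l' = l by apply/eqP; rewrite eqn_leq h ll'.
      by rewrite pl (negPf qa).
    by rewrite (negPf qa).
  have exb : exists k, q \notin succ (l + k)%N q by [].
  case: (ex_minnP exb) => n0 n0h n0min.
  have inS : forall k, (k < n0)%N -> q \in succ (l + k)%N q.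
    move=> k kn; apply/negPn/negP => h.
    by have := n0min k h; rewrite leqNgt kn.
  have lvlk : forall k, (k <= n0)%N -> q \in lvl (l + k)%N.
    elim=> [|k IH] kn; first by rewrite addn0.
    by rewrite addnS; apply: sub (IH (ltnW kn)) (inS k kn).
  have step : forall d, (d <= n0)%N -> (d < n0 -> lab q (sfx pi (l + d).+1))%N ->
      lab q (sfx pi (l + d)%N).
    move=> d dn hnext.
    have e0 : sfx pi (l + d)%N 0%N = pi (l + d)%N by rewrite /Defs.suffix addn0.
    apply: (g_bi G (S := succ (l + d)%N q)) => //.
    - exact: eper_suffix.
    - by rewrite e0; apply: Ld; apply: lvlk.
    - rewrite e0 => q' q'S at0.
      have e : sfx (sfx pi (l + d)%N) 1 = sfx pi (l + d).+1 by rewrite suffixA addn1.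
      rewrite e; have [eq|lt] := g_rank G at0.
        rewrite eq; apply: hnext; rewrite ltn_neqAle dn andbT.
        by apply/eqP => dn0; move: n0h; rewrite -dn0 -{1}eq q'S.
      by apply: IHq lt; apply: sub (lvlk d dn) q'S.
  have all : forall e, (e <= n0)%N -> lab q (sfx pi (l + (n0 - e))%N).
    elim=> [|e IH] en.
      by apply: step; rewrite ?subn0 ?ltnn.
    apply: step; first exact: leq_subr.
    move=> _; have := IH (ltnW en).
    by rewrite -addnS subnSK.
  by have := all n0 (leqnn _); rewrite subnn addn0.
rewrite -[pi]suffix0; apply: (main (rank (q_in A)).+1) => //.
by rewrite L0; apply/set1P.
Qed.

Lemma good_weak : weak A.
Proof.
exists #|Q|, enum_rank, (fun i j => i = j \/ (rank (enum_val i) < rank (enum_val j))%N).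
split; first by move=> i; left.
split; first by move=> i j [//|h1] [//|h2]; exfalso; have := ltn_trans h1 h2; rewrite ltnn.
split.
  move=> i j k [e1|h1] [e2|h2].
  - by left; rewrite e1 e2.
  - by right; rewrite e1.
  - by right; rewrite -e2.
  - by right; exact: ltn_trans h1 h2.
split.
  move=> i; case: (boolP (enum_val i \in acc A)) => h; [left|right].
    apply/fintype.subsetP => q; rewrite inE => /eqP e; by rewrite -(enum_rankK q) e.
  apply/pred0P => q /=; rewrite inE; apply/negP => /andP[/eqP e].
  by rewrite -(enum_rankK q) e (negPf h).
move=> q s q' at0; rewrite !enum_rankK.
by case: (g_rank G at0) => [->|lt]; [left|right].
Qed.
End Good.

Definition Recog (L : comp -> Prop) := exists (Q : finType) (A : aba Sig Q)
  (lab : Q -> comp -> Prop) (rank : Q -> nat) (B : nat) (m : Q -> comp -> nat),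
  good A lab rank B m /\ forall pi, lab (q_in A) pi <-> L pi.

Definition aut_letter (P : Sig -> Prop) : aba Sig unit :=
  ABA tt (fun _ s => if `[< P s >] then PTrue _ else PFalse _) finset.set0.

Lemma recog_letter (P : Sig -> Prop) : Recog (fun pi => P (pi 0%N)).
Proof.
exists unit, (aut_letter P), (fun _ pi => P (pi 0%N)), (fun _ => 0%N), 1%N,
  (fun _ _ => 0%N); split=> //.
split=> //=.
- by move=> q s q'; case: ifP.
- move=> q pi h; exists finset.set0; split; last by move=> q'; rewrite inE.
  by case: asboolP.
- by move=> q pi S _ _; case: asboolP.
- by move=> q pi X; rewrite inE.
Qed.

Section Comb.
Variables (Q1 Q2 : finType) (A1 : aba Sig Q1) (A2 : aba Sig Q2).
Variables (lab1 : Q1 -> comp -> Prop) (lab2 : Q2 -> comp -> Prop).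
Variables (r1 : Q1 -> nat) (r2 : Q2 -> nat) (B1 B2 : nat).
Variables (m1 : Q1 -> comp -> nat) (m2 : Q2 -> comp -> nat).
Hypothesis G1 : good A1 lab1 r1 B1 m1.
Hypothesis G2 : good A2 lab2 r2 B2 m2.
Local Notation QC := (option (Q1 + Q2)).
Definition i1 (q : Q1) : QC := Some (inl q).
Definition i2 (q : Q2) : QC := Some (inr q).
Variable rd : Sig -> pbf QC.
Variable racc : bool.
Variable Lr : comp -> Prop.
Variable mr : comp -> nat.

Definition combA : aba Sig QC :=
  ABA None (fun q s => match q with
    | None => rd s
    | Some (inl q1) => pbf_map i1 (delta A1 q1 s)
    | Some (inr q2) => pbf_map i2 (delta A2 q2 s) end)
  [set q | match q with None => racc | Some (inl q1) => q1 \in acc A1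
           | Some (inr q2) => q2 \in acc A2 end].

Definition clab (q : QC) : comp -> Prop :=
  match q with None => Lr | Some (inl q1) => lab1 q1 | Some (inr q2) => lab2 q2 end.
Definition crank (q : QC) : nat :=
  match q with None => (B1 + B2)%N | Some (inl q1) => r1 q1 | Some (inr q2) => r2 q2 end.
Definition cm (q : QC) : comp -> nat :=
  match q with None => mr | Some (inl q1) => m1 q1 | Some (inr q2) => m2 q2 end.

Lemma i1_inj : injective i1. Proof. by move=> x y []. Qed.
Lemma i2_inj : injective i2. Proof. by move=> x y []. Qed.

Lemma fwd1 q pi : lab1 q pi -> exists S, pbf_sat S (pbf_map i1 (delta A1 q (pi 0%N))) /\
  forall q', q' \in S -> q' <> None /\ clab q' (sfx pi 1).
Proof.
move=> /(g_fwd G1) [S [sat hS]]; exists (i1 @: S); split.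
  apply/pbf_sat_map; apply: pbf_sat_mono sat; apply/fintype.subsetP => x xS.
  by rewrite inE; apply: imset_f.
by move=> q' /imsetP [x xS ->]; have [] := hS x xS.
Qed.

Lemma fwd2 q pi : lab2 q pi -> exists S, pbf_sat S (pbf_map i2 (delta A2 q (pi 0%N))) /\
  forall q', q' \in S -> q' <> None /\ clab q' (sfx pi 1).
Proof.
move=> /(g_fwd G2) [S [sat hS]]; exists (i2 @: S); split.
  apply/pbf_sat_map; apply: pbf_sat_mono sat; apply/fintype.subsetP => x xS.
  by rewrite inE; apply: imset_f.
by move=> q' /imsetP [x xS ->]; have [] := hS x xS.
Qed.

Lemma back1 q pi S : eper pi -> pbf_sat S (pbf_map i1 (delta A1 q (pi 0%N))) ->
  (forall q', q' \in S -> pbf_atoms (pbf_map i1 (delta A1 q (pi 0%N))) q' ->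
     clab q' (sfx pi 1)) -> lab1 q pi.
Proof.
move=> E /pbf_sat_map sat hS; apply: (good_back G1 E sat) => x.
rewrite inE => xS at0; exact: (hS _ xS (pbf_atoms_map_f i1 at0)).
Qed.

Lemma back2 q pi S : eper pi -> pbf_sat S (pbf_map i2 (delta A2 q (pi 0%N))) ->
  (forall q', q' \in S -> pbf_atoms (pbf_map i2 (delta A2 q (pi 0%N))) q' ->
     clab q' (sfx pi 1)) -> lab2 q pi.
Proof.
move=> E /pbf_sat_map sat hS; apply: (good_back G2 E sat) => x.
rewrite inE => xS at0; exact: (hS _ xS (pbf_atoms_map_f i2 at0)).
Qed.

Hypothesis HF : forall pi, Lr pi -> exists S, pbf_sat S (rd (pi 0%N)) /\
  forall q', q' \in S -> clab q' (sfx pi 1) /\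
    (q' = None -> ~~ racc -> (mr (sfx pi 1) < mr pi)%N).
Hypothesis HBi : ~~ racc -> forall pi S, eper pi -> pbf_sat S (rd (pi 0%N)) ->
  (forall q', q' \in S -> pbf_atoms (rd (pi 0%N)) q' -> clab q' (sfx pi 1)) -> Lr pi.
Hypothesis HBc : racc -> forall pi (X : nat -> Prop), eper pi ->
  (forall l, X l -> exists S, pbf_sat S (rd (pi l)) /\
     forall q', q' \in S -> pbf_atoms (rd (pi l)) q' ->
       (q' = None -> X l.+1) /\ (q' <> None -> clab q' (sfx pi l.+1))) ->
  X 0%N -> Lr pi.

Lemma comb_good : good combA clab crank (B1 + B2).+1 cm.
Proof.
split.
- case=> [[q|q]|] /=.
  + by have := g_rank_bd G1 q; lia.
  + by have := g_rank_bd G2 q; lia.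
  + lia.
- case=> [[q|q]|] s q' /=.
  + move=> h; have [x [-> at0]] := pbf_atoms_map h; case: (g_rank G1 at0) => [->|lt]; [by left|by right].
  + move=> h; have [x [-> at0]] := pbf_atoms_map h; case: (g_rank G2 at0) => [->|lt]; [by left|by right].
  + move=> _; case: q' => [[x|x]|]; [right|right|by left] => /=.
      by have := g_rank_bd G1 x; lia.
    by have := g_rank_bd G2 x; lia.
- case=> [[q|q]|] pi /=.
  + move=> /(g_fwd G1) [S [sat hS]]; exists (i1 @: S); split.
      apply/pbf_sat_map; apply: pbf_sat_mono sat; apply/fintype.subsetP => x xS.
      by rewrite inE; apply: imset_f.
    move=> q' /imsetP [x xS ->]; have [h1 h2] := hS x xS; split=> // /i1_inj e.
    by rewrite inE /=; apply: h2.
  + move=> /(g_fwd G2) [S [sat hS]]; exists (i2 @: S); split.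
      apply/pbf_sat_map; apply: pbf_sat_mono sat; apply/fintype.subsetP => x xS.
      by rewrite inE; apply: imset_f.
    move=> q' /imsetP [x xS ->]; have [h1 h2] := hS x xS; split=> // /i2_inj e.
    by rewrite inE /=; apply: h2.
  + move=> /HF [S [sat hS]]; exists S; split=> // q' q'S.
    have [h1 h2] := hS q' q'S; split=> // e; rewrite inE; exact: h2.
- case=> [[q|q]|] pi S /=; rewrite inE /= => na E.
  + move=> sat hS; apply: (back1 E sat) => q' q'S at0; exact: hS.
  + move=> sat hS; apply: (back2 E sat) => q' q'S at0; exact: hS.
  + exact: HBi.
- case=> [[q|q]|] pi X /=; rewrite inE /= => a E hX X0.
  + apply: (g_bc G1 (X := X)) => // l /hX [S [/pbf_sat_map sat hS]].
    exists (i1 @^-1: S); split=> // x; rewrite inE => xS at0.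
    have [h1 h2] := hS _ xS (pbf_atoms_map_f i1 at0).
    split; first by move=> e; apply: h1; rewrite e.
    by move=> ne; apply: h2 => /i1_inj.
  + apply: (g_bc G2 (X := X)) => // l /hX [S [/pbf_sat_map sat hS]].
    exists (i2 @^-1: S); split=> // x; rewrite inE => xS at0.
    have [h1 h2] := hS _ xS (pbf_atoms_map_f i2 at0).
    split; first by move=> e; apply: h1; rewrite e.
    by move=> ne; apply: h2 => /i2_inj.
  + by apply: (HBc a E hX X0).
Qed.
End Comb.

Lemma atoms_i1_None (Q1 Q2 : finType) b q' :
  pbf_atoms (pbf_map (@i1 Q1 Q2) b) q' -> q' <> None.
Proof. by move=> h; have [x [-> _]] := pbf_atoms_map h. Qed.
Lemma atoms_i2_None (Q1 Q2 : finType) b q' :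
  pbf_atoms (pbf_map (@i2 Q1 Q2) b) q' -> q' <> None.
Proof. by move=> h; have [x [-> _]] := pbf_atoms_map h. Qed.

Lemma exP_asbool (P : nat -> Prop) : (exists n, P n) -> exists n, `[< P n >].
Proof. by case=> n h; exists n; apply/asboolP. Qed.

Definition minw (P : nat -> Prop) : nat :=
  match pselect (exists n, P n) with
  | left H => ex_minn (exP_asbool H)
  | right _ => 0%N end.

Lemma minwP (P : nat -> Prop) n : P n -> P (minw P) /\ (minw P <= n)%N.
Proof.
rewrite /minw => Pn; case: pselect => [H|nH]; last by exfalso; apply: nH; exists n.
case: ex_minnP => k /asboolP Pk hmin; split=> //; apply: hmin; exact/asboolP.
Qed.

Ltac recog_intro := rewrite /Recog; move=> [Q1 [A1 [lab1 [r1 [B1 [m1 [G1 E1]]]]]]]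
   [Q2 [A2 [lab2 [r2 [B2 [m2 [G2 E2]]]]]]].

Lemma recog_or L1 L2 : Recog L1 -> Recog L2 -> Recog (fun pi => L1 pi \/ L2 pi).
Proof.
recog_intro.
pose rd s := POr (pbf_map (@i1 Q1 Q2) (delta A1 (q_in A1) s))
                 (pbf_map (@i2 Q1 Q2) (delta A2 (q_in A2) s)).
pose Lr pi := lab1 (q_in A1) pi \/ lab2 (q_in A2) pi.
have G : good (combA A1 A2 rd false) (clab lab1 lab2 Lr) (crank r1 r2 B1 B2)
   (B1 + B2).+1 (cm m1 m2 (fun _ => 0%N)).
  apply: comb_good => //.
  - move=> pi [h|h].
      have [S [sat hS]] := fwd1 lab2 G1 Lr h; exists S; split; first by left.
      by move=> q' /hS [ne c]; split.
    have [S [sat hS]] := fwd2 lab1 G2 Lr h; exists S; split; first by right.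
    by move=> q' /hS [ne c]; split.
  - move=> _ pi S E [sat|sat] hS.
      by left; apply: (back1 G1 E sat) => q' q'S at0; apply: hS => //; left.
    by right; apply: (back2 G2 E sat) => q' q'S at0; apply: hS => //; right.
rewrite /Recog; do 6!eexists; split; first exact: G.
by move=> pi /=; rewrite /Lr E1 E2.
Qed.

Lemma recog_and L1 L2 : Recog L1 -> Recog L2 -> Recog (fun pi => L1 pi /\ L2 pi).
Proof.
recog_intro.
pose rd s := PAnd (pbf_map (@i1 Q1 Q2) (delta A1 (q_in A1) s))
                 (pbf_map (@i2 Q1 Q2) (delta A2 (q_in A2) s)).
pose Lr pi := lab1 (q_in A1) pi /\ lab2 (q_in A2) pi.
have G : good (combA A1 A2 rd false) (clab lab1 lab2 Lr) (crank r1 r2 B1 B2)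
   (B1 + B2).+1 (cm m1 m2 (fun _ => 0%N)).
  apply: comb_good => //.
  - move=> pi [h1 h2].
    have [S1 [sat1 hS1]] := fwd1 lab2 G1 Lr h1.
    have [S2 [sat2 hS2]] := fwd2 lab1 G2 Lr h2.
    exists (S1 :|: S2); split.
      by split; apply: pbf_sat_mono; [| exact: sat1 | | exact: sat2];
         [apply: finset.subsetUl | apply: finset.subsetUr].
    by move=> q' /setUP [/hS1|/hS2] [ne c]; split.
  - move=> _ pi S E [sat1 sat2] hS; split.
      by apply: (back1 G1 E sat1) => q' q'S at0; apply: hS => //; left.
    by apply: (back2 G2 E sat2) => q' q'S at0; apply: hS => //; right.
rewrite /Recog; do 6!eexists; split; first exact: G.
by move=> pi /=; rewrite /Lr E1 E2.
Qed.

Lemma recog_next L1 : Recog L1 -> Recog (fun pi => L1 (sfx pi 1)).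
Proof.
rewrite /Recog; move=> [Q1 [A1 [lab1 [r1 [B1 [m1 [G1 E1]]]]]]].
pose rd (s : Sig) := PAtom (@i1 Q1 Q1 (q_in A1)).
pose Lr pi := lab1 (q_in A1) (sfx pi 1).
have G : good (combA A1 A1 rd false) (clab lab1 lab1 Lr) (crank r1 r1 B1 B1)
   (B1 + B1).+1 (cm m1 m1 (fun _ => 0%N)).
  apply: comb_good => //.
  - move=> pi h; exists [set @i1 Q1 Q1 (q_in A1)]; split; first by rewrite /= inE.
    by move=> q' /set1P ->.
  - move=> _ pi S E sat hS; exact: (hS _ sat).
rewrite /Recog; do 6!eexists; split; first exact: G.
by move=> pi /=; rewrite /Lr E1.
Qed.

Lemma recog_until L1 L2 : Recog L1 -> Recog L2 ->
  Recog (fun pi => exists i, L2 (sfx pi i) /\ forall j, (j < i)%N -> L1 (sfx pi j)).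
Proof.
recog_intro.
pose rd s := POr (pbf_map (@i2 Q1 Q2) (delta A2 (q_in A2) s))
                 (PAnd (pbf_map (@i1 Q1 Q2) (delta A1 (q_in A1) s)) (PAtom None)).
pose W pi i := lab2 (q_in A2) (sfx pi i) /\ forall j, (j < i)%N -> lab1 (q_in A1) (sfx pi j).
pose Lr pi := exists i, W pi i.
pose mr pi := minw (W pi).
have G : good (combA A1 A2 rd false) (clab lab1 lab2 Lr) (crank r1 r2 B1 B2)
   (B1 + B2).+1 (cm m1 m2 mr).
  apply: comb_good => //.
  - move=> pi [i Wi]; have [[h2 h1] _] := minwP Wi.
    case e: (minw (W pi)) h2 h1 => [|k] h2 h1.
      rewrite suffix0 in h2; have [S [sat hS]] := fwd2 lab1 G2 Lr h2.
      exists S; split; first by left.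
      by move=> q' /hS [ne c]; split.
    have h10 := h1 0%N erefl; rewrite suffix0 in h10.
    have [S [sat hS]] := fwd1 lab2 G1 Lr h10.
    have Wk : W (sfx pi 1) k.
      split; first by rewrite suffixA add1n.
      by move=> j jk; rewrite suffixA add1n; apply: h1.
    exists (None |: S); split.
      right; split; last by rewrite /= setU11.
      by apply: pbf_sat_mono sat; apply: finset.subsetUr.
    move=> q' /setU1P [->|/hS [ne c]]; last by split.
    split; first by exists k.
    by move=> _ _ /=; rewrite /mr e; have [_ ] := minwP Wk.
  - move=> _ pi S E [sat|[sat nS]] hS.
      exists 0%N; split; last by [].
      rewrite suffix0; apply: (back2 G2 E sat) => q' q'S at0; apply: hS => //; by left.
    have h1 : lab1 (q_in A1) pi.
      apply: (back1 G1 E sat) => q' q'S at0; apply: hS => //; by right; left.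
    have [k [Wk1 Wk2]] : Lr (sfx pi 1) by apply: (hS None nS); right; right.
    exists k.+1; split; first by move: Wk1; rewrite suffixA add1n.
    case=> [|j] jk; first by rewrite suffix0.
    by have := Wk2 j jk; rewrite suffixA add1n.
rewrite /Recog; do 6!eexists; split; first exact: G.
move=> pi /=; split; case=> i [h1 h2]; exists i; split.
- by rewrite -E2.
- by move=> j /h2; rewrite E1.
- by rewrite E2.
- by move=> j /h2; rewrite -E1.
Qed.

Lemma recog_release L1 L2 : Recog L1 -> Recog L2 ->
  Recog (fun pi => forall i, L2 (sfx pi i) \/ exists j, (j < i)%N /\ L1 (sfx pi j)).
Proof.
recog_intro.
pose rd s := PAnd (pbf_map (@i2 Q1 Q2) (delta A2 (q_in A2) s))
                 (POr (pbf_map (@i1 Q1 Q2) (delta A1 (q_in A1) s)) (PAtom None)).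
pose Lr pi := forall i, lab2 (q_in A2) (sfx pi i) \/
                 exists j, (j < i)%N /\ lab1 (q_in A1) (sfx pi j).
have G : good (combA A1 A2 rd true) (clab lab1 lab2 Lr) (crank r1 r2 B1 B2)
   (B1 + B2).+1 (cm m1 m2 (fun _ => 0%N)).
  apply: comb_good => //.
  - move=> pi h.
    have h2 : lab2 (q_in A2) pi by case: (h 0%N) => [|[j []]]; rewrite ?suffix0.
    have [S2 [sat2 hS2]] := fwd2 lab1 G2 Lr h2.
    case: (pselect (lab1 (q_in A1) pi)) => h1.
      have [S1 [sat1 hS1]] := fwd1 lab2 G1 Lr h1.
      exists (S2 :|: S1); split.
        split; first by apply: pbf_sat_mono sat2; apply: finset.subsetUl.
        by left; apply: pbf_sat_mono sat1; apply: finset.subsetUr.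
      by move=> q' /setUP [/hS2|/hS1] [ne c]; split.
    exists (S2 :|: [set None]); split.
      split; first by apply: pbf_sat_mono sat2; apply: finset.subsetUl.
      by right; apply/setUP; right; apply/set1P.
    move=> q' /setUP [/hS2 [ne c]|/set1P ->]; first by split.
    split=> // i /=; case: (h i.+1) => [l2|[[|j] [ji l1]]].
    + by left; rewrite suffixA add1n.
    + by exfalso; apply: h1; rewrite -(suffix0 pi).
    + by right; exists j; split=> //; rewrite suffixA add1n.
  - move=> _ pi X E hX X0.
    have C : forall i, (exists j, (j < i)%N /\ lab1 (q_in A1) (sfx pi j)) \/ X i.
      elim=> [|i [[j [ji l1]]|Xi]]; first by right.
        by left; exists j; split=> //; apply: ltn_trans ji _.
      have [S [[sat2 satO] hS]] := hX i Xi.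
      have e0 : sfx pi i 0%N = pi i by rewrite /Defs.suffix addn0.
      have e1 : sfx (sfx pi i) 1 = sfx pi i.+1 by rewrite suffixA addn1.
      case: satO => [sat1|nS].
        left; exists i; split=> //.
        apply: (back1 G1 (eper_suffix i E)); first by rewrite e0; exact: sat1.
        move=> q' q'S at0; rewrite e1; rewrite e0 in at0.
        have [_ h] := hS q' q'S (or_intror (or_introl at0)).
        exact: h (atoms_i1_None at0).
      by right; have [h _] := hS None nS (or_intror (or_intror erefl)); apply: h.
    move=> i; case: (C i) => [ex|Xi]; first by right.
    left; have [S [[sat2 _] hS]] := hX i Xi.
    have e0 : sfx pi i 0%N = pi i by rewrite /Defs.suffix addn0.
    have e1 : sfx (sfx pi i) 1 = sfx pi i.+1 by rewrite suffixA addn1.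
    apply: (back2 G2 (eper_suffix i E)); first by rewrite e0; exact: sat2.
    move=> q' q'S at0; rewrite e1; rewrite e0 in at0.
    have [_ h] := hS q' q'S (or_introl at0).
    exact: h (atoms_i2_None at0).
rewrite /Recog; do 6!eexists; split; first exact: G.
move=> pi /=; split=> h i; case: (h i) => [l2|[j [ji l1]]].
- by left; rewrite -E2.
- by right; exists j; rewrite -E1.
- by left; rewrite E2.
- by right; exists j; rewrite E1.
Qed.
End Aut.


Section Sand.
Variable AP : finType.
Local Notation comp := (computation AP).
Local Notation Sig := {set AP}.
Local Notation sfx := Defs.suffix.

Definition Sand (L : comp -> Prop) := exists L', Recog L' /\
  (forall pi, L pi -> L' pi) /\ (forall pi, eper pi -> L' pi -> L pi).

Lemma Sand_letter (P : Sig -> Prop) : Sand (fun pi => P (pi 0%N)).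
Proof. by exists (fun pi => P (pi 0%N)); split; [exact: recog_letter|]. Qed.

Lemma Sand_ext L M : Sand L -> (forall pi, M pi -> L pi) ->
  (forall pi, eper pi -> L pi -> M pi) -> Sand M.
Proof.
move=> [L' [R [h1 h2]]] hM hL; exists L'; split=> //; split.
  by move=> pi /hM /h1.
by move=> pi E /(h2 _ E) /(hL _ E).
Qed.

Lemma Sand_or L1 L2 : Sand L1 -> Sand L2 -> Sand (fun pi => L1 pi \/ L2 pi).
Proof.
move=> [L1' [R1 [a1 b1]]] [L2' [R2 [a2 b2]]].
exists (fun pi => L1' pi \/ L2' pi); split; first exact: recog_or.
split; first by move=> pi [/a1|/a2]; [left|right].
by move=> pi E [/(b1 _ E)|/(b2 _ E)]; [left|right].
Qed.

Lemma Sand_and L1 L2 : Sand L1 -> Sand L2 -> Sand (fun pi => L1 pi /\ L2 pi).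
Proof.
move=> [L1' [R1 [a1 b1]]] [L2' [R2 [a2 b2]]].
exists (fun pi => L1' pi /\ L2' pi); split; first exact: recog_and.
split; first by move=> pi [/a1 ? /a2 ?].
by move=> pi E [/(b1 _ E) ? /(b2 _ E) ?].
Qed.

Lemma Sand_next L : Sand L -> Sand (fun pi => L (sfx pi 1)).
Proof.
move=> [L' [R [a b]]]; exists (fun pi => L' (sfx pi 1)); split; first exact: recog_next.
split; first by move=> pi /a.
by move=> pi E /b; apply; apply: eper_suffix.
Qed.

Lemma Sand_until L1 L2 : Sand L1 -> Sand L2 ->
  Sand (fun pi => exists i, L2 (sfx pi i) /\ forall j, (j < i)%N -> L1 (sfx pi j)).
Proof.
move=> [L1' [R1 [a1 b1]]] [L2' [R2 [a2 b2]]].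
exists (fun pi => exists i, L2' (sfx pi i) /\ forall j, (j < i)%N -> L1' (sfx pi j)).
split; first exact: recog_until.
split; first by move=> pi [i [h2 h1]]; exists i; split; [apply: a2|move=> j /h1 /a1].
move=> pi E [i [h2 h1]]; exists i; split; first by apply: b2 h2; apply: eper_suffix.
by move=> j /h1; apply: b1; apply: eper_suffix.
Qed.

Lemma Sand_release L1 L2 : Sand L1 -> Sand L2 ->
  Sand (fun pi => forall i, L2 (sfx pi i) \/ exists j, (j < i)%N /\ L1 (sfx pi j)).
Proof.
move=> [L1' [R1 [a1 b1]]] [L2' [R2 [a2 b2]]].
exists (fun pi => forall i, L2' (sfx pi i) \/ exists j, (j < i)%N /\ L1' (sfx pi j)).
split; first exact: recog_release.
split.
  move=> pi h i; case: (h i) => [/a2|[j [ji /a1]]]; [by left|by right; exists j].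
move=> pi E h i; case: (h i) => [|[j [ji]]].
  by move/b2 => h2; left; apply: h2; apply: eper_suffix.
by move/b1 => h1; right; exists j; split=> //; apply: h1; apply: eper_suffix.
Qed.

Lemma Sand_const (b : Prop) : Sand (fun _ => b).
Proof. exact: (Sand_letter (fun _ => b)). Qed.

Lemma Sand_exlt N (P : nat -> comp -> Prop) : (forall i, (i < N)%N -> Sand (P i)) ->
  Sand (fun pi => exists i, (i < N)%N /\ P i pi).
Proof.
elim: N => [|N IH] hP.
  by apply: Sand_ext (Sand_const False) _ _ => // pi [i []].
have := Sand_or (IH (fun i iN => hP i (ltnW iN))) (hP N (ltnSn N)).
move/Sand_ext; apply.
  move=> pi [i [iN h]]; rewrite ltnS leq_eqVlt in iN.
  by case/orP: iN => [/eqP e|lt]; [right; rewrite -e|left; exists i].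
move=> pi _ [[i [iN h]]|h]; [exists i; split=> //; exact: ltnW|by exists N].
Qed.

Lemma Sand_alllt N (P : nat -> comp -> Prop) : (forall i, (i < N)%N -> Sand (P i)) ->
  Sand (fun pi => forall i, (i < N)%N -> P i pi).
Proof.
elim: N => [|N IH] hP.
  by apply: Sand_ext (Sand_const True) _ _.
have := Sand_and (IH (fun i iN => hP i (ltnW iN))) (hP N (ltnSn N)).
move/Sand_ext; apply.
  by move=> pi h; split; [move=> i iN; apply: h; apply: ltnW|apply: h].
move=> pi _ [h1 h2] i; rewrite ltnS leq_eqVlt => /orP [/eqP ->|]; [exact: h2|exact: h1].
Qed.

Lemma Sand_nextn k L : Sand L -> Sand (fun pi => L (sfx pi k)).
Proof.
elim: k L => [|k IH] L h.
  by apply: Sand_ext h _ _ => pi; rewrite suffix0.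
have := IH _ (Sand_next h); move/Sand_ext; apply=> pi; rewrite suffixA addn1 //.
Qed.

End Sand.

Local Open Scope ring_scope.


Section Sem.
Variable R : realType.

Lemma sup_range_ge (t : nat -> R) (M : R) : (forall i, t i <= M) -> forall i, t i <= sup (range t).
Proof. move=> H i. apply: ub_le_sup; last by exists i. by exists M => _ [j _ <-]. Qed.
Lemma sup_range_le (t : nat -> R) (M : R) : (forall i, t i <= M) -> sup (range t) <= M.
Proof. move=> H; apply: ge_sup; first by exists (t 0%N), 0%N. by move=> _ [j _ <-]. Qed.
Lemma sup_range_gt (t : nat -> R) v : v < sup (range t) -> exists i, v < t i.
Proof. move=> /sup_gt. case; first by exists (t 0%N), 0%N. by move=> _ [j _ <-] h; exists j. Qed.

Lemma minj0 (F : nat -> R) : minj 0 F = 1.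
Proof. by rewrite /minj big_ord0. Qed.
Lemma minjS i (F : nat -> R) : minj i.+1 F = Order.min (minj i F) (F i).
Proof.
have L : forall k (G : nat -> R), minj k.+1 G = Order.min (G 0%N) (minj k (fun j => G j.+1)).
  by move=> k G; rewrite /minj big_ord_recl.
elim: i F => [|i IH] F; first by rewrite L /minj !big_ord0 minC.
by rewrite L IH L minA.
Qed.

Lemma minj_le1 i (F : nat -> R) : minj i F <= 1.
Proof. elim: i => [|i IH]; first by rewrite minj0. by rewrite minjS ge_min IH. Qed.

Lemma minj_ge0 i (F : nat -> R) : (forall j, 0 <= F j) -> 0 <= minj i F.
Proof.
move=> h; elim: i => [|i IH]; first by rewrite minj0.
by rewrite minjS le_min IH h.
Qed.

Lemma minj_mono i k (F : nat -> R) : minj (i + k) F <= minj i F.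
Proof.
elim: k => [|k IH]; first by rewrite addn0.
by rewrite addnS minjS ge_min IH.
Qed.

Lemma lt_minj v i (F : nat -> R) :
  v < minj i F <-> v < 1 /\ forall j, (j < i)%N -> v < F j.
Proof.
elim: i => [|i IH]; first by rewrite minj0; split=> [h|[]//]; split.
rewrite minjS lt_min; split.
  move=> /andP [/IH [h1 h2] h3]; split=> // j; rewrite ltnS leq_eqVlt => /orP [/eqP ->//|].
  exact: h2.
move=> [h1 h2]; apply/andP; split; last exact: h2.
by apply/IH; split=> // j ji; apply: h2; apply: ltn_trans ji _.
Qed.

Lemma minj_lt v i (F : nat -> R) :
  minj i F < v <-> 1 < v \/ exists j, (j < i)%N /\ F j < v.
Proof.
elim: i => [|i IH]; first by rewrite minj0; split=> [h|[h|[j []]]] //; left.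
rewrite minjS gt_min; split.
  case/orP => [/IH [h|[j [ji h]]]|h]; first by left.
    by right; exists j; split=> //; apply: ltn_trans ji _.
  by right; exists i.
move=> [h|[j [ji h]]]; apply/orP; first by left; apply/IH; left.
move: ji; rewrite ltnS leq_eqVlt => /orP [/eqP e|ji]; first by right; rewrite -e.
by left; apply/IH; right; exists j.
Qed.

Lemma fin_max (t : nat -> R) v K : (forall i, (i < K)%N -> t i < v) ->
  exists M, M < v /\ forall i, (i < K)%N -> t i <= M.
Proof.
elim: K => [|K IH] h; first by exists (v - 1); split=> //; lra.
have [M [Mv hM]] := IH (fun i iK => h i (ltnW iK)).
exists (Num.max M (t K)); split; first by rewrite gt_max Mv h.
move=> i; rewrite ltnS leq_eqVlt => /orP [/eqP ->|iK]; first by rewrite le_max lexx orbT.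
by rewrite le_max hM.
Qed.

Variable AP : finType.
Local Notation comp := (computation AP).
Local Notation sfx := Defs.suffix.

Lemma eper_period (pi : comp) : eper pi -> exists K, forall i,
  exists i', [/\ (i' < K)%N, (i' <= i)%N & sfx pi i = sfx pi i'].
Proof.
case=> K0 [p [p0 hp]]; exists (K0 + p)%N.
elim/ltn_ind => i IH.
case: (ltnP i (K0 + p)) => iK; first by exists i.
have lt : (i - p < i)%N by lia.
have [i' [h1 h2 h3]] := IH _ lt.
exists i'; split=> //; first by lia.
rewrite -h3; apply: funext => n; rewrite /Defs.suffix.
have -> : (i + n = (i - p + n) + p)%N by lia.
by rewrite hp //; lia.
Qed.

Variable D : set (nat -> R).
Hypothesis HD : forall eta, D eta -> discounting eta.

Lemma eta_pos (eta : nat -> R) : discounting eta -> forall i, 0 < eta i.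
Proof.
move=> [h1 [h2 _]] i; have := h2 i i.+1 (ltnSn i).
by have /andP [h _] := h1 i.+1; apply: le_lt_trans.
Qed.

Lemma eta_le (eta : nat -> R) : discounting eta -> forall i k, eta (i + k)%N <= eta i.
Proof.
move=> [h1 [h2 _]] i [|k]; first by rewrite addn0.
by apply: ltW; apply: h2; lia.
Qed.

Lemma term_bd (a : R) i (F : nat -> R) : 0 <= a <= 1 -> (forall j, 0 <= F j <= 1) ->
  0 <= Order.min a (minj i F) <= 1.
Proof.
move=> /andP [a0 a1] hF; apply/andP; split.
  by rewrite le_min a0 minj_ge0 // => j; have /andP [] := hF j.
by rewrite ge_min a1.
Qed.

Lemma value_bd (phi : ltl R AP) : in_disc D phi -> forall pi, 0 <= value phi pi <= 1.
Proof.
elim: phi => /=.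
- by move=> _ _; rewrite ler01 lexx.
- by move=> p _ pi; case: ifP => _; rewrite ?ler01 ?lexx.
- move=> f IH hf pi; have /andP [h1 h2] := IH hf pi; apply/andP; split; lra.
- move=> f IHf g IHg [hf hg] pi.
  have /andP [h1 h2] := IHf hf pi; have /andP [h3 h4] := IHg hg pi.
  by rewrite le_max h1 ge_max h2 h4.
- by move=> f IH hf pi; apply: IH.
- move=> f IHf g IHg [hf hg] pi.
  set t := fun i => _.
  have tb : forall i, 0 <= t i <= 1.
    by move=> i; apply: term_bd; [apply: (IHg hg)|move=> j; apply: (IHf hf)].
  apply/andP; split.
    apply: le_trans (sup_range_ge (M := 1) _ 0%N); first by have /andP [] := tb 0%N.
    by move=> i; have /andP [] := tb i.
  by apply: sup_range_le => i; have /andP [] := tb i.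
- move=> eta f IHf g IHg [he [hf hg]] pi.
  have [eb _] := HD he.
  have pb : forall (h : ltl R AP) i, (forall pi, 0 <= value h pi <= 1) ->
      0 <= eta i * value h (Defs.suffix pi i) <= 1.
    move=> h i hh; have /andP [a b] := eb i; have /andP [c d] := hh (Defs.suffix pi i).
    apply/andP; split; nra.
  set t := fun i => _.
  have tb : forall i, 0 <= t i <= 1.
    by move=> i; apply: term_bd; [apply: pb; apply: (IHg hg)|move=> j; apply: pb; apply: (IHf hf)].
  apply/andP; split.
    apply: le_trans (sup_range_ge (M := 1) _ 0%N); first by have /andP [] := tb 0%N.
    by move=> i; have /andP [] := tb i.
  by apply: sup_range_le => i; have /andP [] := tb i.
Qed.

Lemma sup_gt_of (t : nat -> R) v i : (forall k, t k <= 1) -> v < t i -> v < sup (range t).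
Proof. move=> hb h; apply: lt_le_trans h _; exact: sup_range_ge hb i. Qed.
Lemma sup_lt_of (t : nat -> R) v M : (forall k, t k <= M) -> M < v -> sup (range t) < v.
Proof. by move=> hb h; apply: le_lt_trans h; exact: sup_range_le. Qed.

Lemma sand_value (phi : ltl R AP) : in_disc D phi -> forall v : R,
  Sand (fun pi : comp => v < value phi pi) /\ Sand (fun pi : comp => value phi pi < v).
Proof.
elim: phi => /=.
- by move=> _ v; split; [exact: (Sand_const _ (v < 1))|exact: (Sand_const _ (1 < v))].
- move=> p _ v; split.
    exact: (Sand_letter (fun s : {set AP} => v < (if p \in s then 1 else 0))).
  exact: (Sand_letter (fun s : {set AP} => (if p \in s then 1 else 0) < v)).
- move=> f IH hf v; have [h1 h2] := IH hf (1 - v); split.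
    by apply: Sand_ext h2 _ _ => [pi h|pi _ h]; lra.
  by apply: Sand_ext h1 _ _ => [pi h|pi _ h]; lra.
- move=> f IHf g IHg [hf hg] v; split.
    apply: Sand_ext (Sand_or (IHf hf v).1 (IHg hg v).1) _ _.
      by move=> pi; rewrite lt_max => /orP [h|h]; [left|right].
    by move=> pi _ [h|h]; rewrite lt_max h ?orbT.
  apply: Sand_ext (Sand_and (IHf hf v).2 (IHg hg v).2) _ _.
    by move=> pi; rewrite gt_max => /andP [].
  by move=> pi _ [h1 h2]; rewrite gt_max h1 h2.
- by move=> f IH hf v; split; [exact: (Sand_next (IH hf v).1)|exact: (Sand_next (IH hf v).2)].
- move=> f IHf g IHg [hf hg] v.
  have bf := value_bd hf; have bg := value_bd hg.
  have tb1 : forall (pi : comp) k, Order.min (value g (sfx pi k))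
       (minj k (fun j => value f (sfx pi j))) <= 1.
    by move=> pi k; rewrite ge_min; have /andP [_ ->] := bg (sfx pi k).
  split.
    apply: Sand_ext (Sand_until (IHf hf v).1 (IHg hg v).1) _ _.
      move=> pi hs; have [i] := sup_range_gt hs; rewrite lt_min => /andP [h1 /lt_minj [_ h2]].
      by exists i; split.
    move=> pi _ [i [h1 h2]]; apply: (sup_gt_of (i := i)) => //.
    rewrite lt_min h1 /=; apply/lt_minj; split=> //.
    by have /andP [_ x] := bg (sfx pi i); exact: lt_le_trans h1 x.
  apply: Sand_ext (Sand_release (IHf hf v).2 (IHg hg v).2) _ _.
    move=> pi hs i.
    have : Order.min (value g (sfx pi i)) (minj i (fun j => value f (sfx pi j))) < v.
      apply: le_lt_trans hs; exact: (sup_range_ge (tb1 pi)).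
    rewrite gt_min => /orP [h|/minj_lt [h|[j [ji h]]]]; first by left.
      by left; have /andP [_ x] := bg (sfx pi i); exact: le_lt_trans x h.
    by right; exists j.
  move=> pi E h; have [K hK] := eper_period E.
  have tv : forall i, Order.min (value g (sfx pi i)) (minj i (fun j => value f (sfx pi j))) < v.
    move=> i; rewrite gt_min; case: (h i) => [->//|[j [ji hj]]].
    by apply/orP; right; apply/minj_lt; right; exists j.
  have [M [Mv hM]] := fin_max (K := K) (fun i (_ : (i < K)%N) => tv i).
  apply: (sup_lt_of (M := M)) => // i.
  have [i' [i'K i'i e]] := hK i.
  apply: le_trans (hM i' i'K); rewrite e le_min !ge_min lexx /=.
  have := minj_mono i' (i - i') (fun j => value f (sfx pi j)); rewrite subnKC // => ->.
  by rewrite orbT.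
- move=> eta f IHf g IHg [he [hf hg]] v.
  have de := HD he; have epos := eta_pos de; have [eb [edec elim]] := de.
  have bf := value_bd hf; have bg := value_bd hg.
  have pb : forall (h : ltl R AP) (pi : comp) i, (forall pi, 0 <= value h pi <= 1) ->
      0 <= eta i * value h (sfx pi i) <= eta i.
    move=> h pi i hh; have /andP [a b] := eb i; have /andP [c d] := hh (sfx pi i).
    apply/andP; split; nra.
  have e1 : forall i, eta i <= 1 by move=> i; have /andP [] := eb i.
  have tle : forall (pi : comp) k, Order.min (eta k * value g (sfx pi k))
       (minj k (fun j => eta j * value f (sfx pi j))) <= eta k.
    by move=> pi k; rewrite ge_min; have /andP [_ ->] := pb g pi k bg.
  have tb1 : forall (pi : comp) k, Order.min (eta k * value g (sfx pi k))
       (minj k (fun j => eta j * value f (sfx pi j))) <= 1.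
    by move=> pi k; apply: le_trans (tle pi k) (e1 k).
  have vb := value_bd (phi := LUntilD eta f g) (conj he (conj hf hg)).
  have Nex : 0 < v -> exists N, forall i, (N <= i)%N -> eta i < v.
    move=> vpos; have [N hN] := elim v vpos; exists N => i Ni.
    have := hN N (leqnn N); rewrite ger0_norm; last exact: ltW (epos N).
    apply: le_lt_trans; have := eta_le de N (i - N); rewrite subnKC //.
  split.
    case: (ltgtP v 0) => [vneg|vpos|v0].
    + apply: Sand_ext (Sand_const _ True) _ _ => // pi _ _.
      by have /andP [x _] := vb pi; apply: lt_le_trans vneg x.
    + have [N hN] := Nex vpos.
      apply: Sand_ext (Sand_exlt (N := N) (P := fun i (pi : comp) =>
         v / eta i < value g (sfx pi i) /\
         forall j, (j < i)%N -> v / eta j < value f (sfx pi j)) _) _ _.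
      * move=> i _; apply: Sand_and; first exact: (Sand_nextn i (IHg hg (v / eta i)).1).
        apply: (Sand_alllt (P := fun j (pi : comp) => v / eta j < value f (sfx pi j))) => j _.
        exact: (Sand_nextn j (IHf hf _).1).
      * move=> pi hs; have [i] := sup_range_gt hs; rewrite lt_min => /andP [h1 /lt_minj [_ h2]].
        exists i; split.
          rewrite ltnNge; apply/negP => Ni; have := hN i Ni.
          have /andP [_ x] := pb g pi i bg.
          by move=> y; have := lt_le_trans h1 x; rewrite ltNge (ltW y).
        split; first by rewrite ltr_pdivrMr // mulrC.
        by move=> j ji; rewrite ltr_pdivrMr // mulrC; apply: h2.
      * move=> pi _ [i [iN [h1 h2]]]; apply: (sup_gt_of (i := i)) => //.
        rewrite ltr_pdivrMr // mulrC in h1.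
        rewrite lt_min h1 /=; apply/lt_minj; split.
          by have /andP [_ x] := pb g pi i bg; apply: lt_le_trans h1 (le_trans x (e1 i)).
        by move=> j ji; have := h2 j ji; rewrite ltr_pdivrMr // mulrC.
    + subst v; apply: Sand_ext (Sand_until (IHf hf 0).1 (IHg hg 0).1) _ _.
      * move=> pi hs; have [i] := sup_range_gt hs; rewrite lt_min => /andP [h1 /lt_minj [_ h2]].
        exists i; split; first by rewrite pmulr_rgt0 in h1.
        by move=> j ji; have := h2 j ji; rewrite pmulr_rgt0.
      * move=> pi _ [i [h1 h2]]; apply: (sup_gt_of (i := i)) => //.
        rewrite lt_min pmulr_rgt0 // h1 /=; apply/lt_minj; split; first exact: ltr01.
        by move=> j ji; rewrite pmulr_rgt0 //; apply: h2.
  case: (lerP v 0) => [vle|vpos].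
    apply: Sand_ext (Sand_const _ False) _ _ => // pi h.
    by have /andP [x _] := vb pi; have := le_lt_trans x h; rewrite ltNge vle.
  have [N hN] := Nex vpos.
  apply: Sand_ext (Sand_alllt (N := N) (P := fun i (pi : comp) =>
     value g (sfx pi i) < v / eta i \/
     exists j, (j < i)%N /\ value f (sfx pi j) < v / eta j) _) _ _.
  - move=> i _; apply: Sand_or; first exact: (Sand_nextn i (IHg hg (v / eta i)).2).
    apply: (Sand_exlt (P := fun j (pi : comp) => value f (sfx pi j) < v / eta j)) => j _.
    exact: (Sand_nextn j (IHf hf _).2).
  - move=> pi hs i iN.
    have : Order.min (eta i * value g (sfx pi i))
        (minj i (fun j => eta j * value f (sfx pi j))) < v.
      apply: le_lt_trans hs; exact: (sup_range_ge (tb1 pi)).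
    rewrite gt_min => /orP [h|/minj_lt [h|[j [ji h]]]].
    + by left; rewrite ltr_pdivlMr // mulrC.
    + left; rewrite ltr_pdivlMr // mulrC.
      have /andP [_ x] := pb g pi i bg; exact: le_lt_trans (le_trans x (e1 i)) h.
    + by right; exists j; split=> //; rewrite ltr_pdivlMr // mulrC.
  - move=> pi _ h.
    have tv : forall i, (i < N)%N -> Order.min (eta i * value g (sfx pi i))
        (minj i (fun j => eta j * value f (sfx pi j))) < v.
      move=> i iN; rewrite gt_min; case: (h i iN) => [hg'|[j [ji hj]]].
        by rewrite ltr_pdivlMr // mulrC in hg'; rewrite hg'.
      apply/orP; right; apply/minj_lt; right; exists j; split=> //.
      by rewrite ltr_pdivlMr // mulrC in hj.
    have [M [Mv hM]] := fin_max tv.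
    apply: (sup_lt_of (M := Num.max M (eta N))); last by rewrite gt_max Mv hN.
    move=> i; case: (ltnP i N) => [iN|Ni].
      by rewrite le_max hM.
    rewrite le_max; apply/orP; right; apply: le_trans (tle pi i) _.
    by have := eta_le de N (i - N); rewrite subnKC.
Qed.

End Sem.

Lemma lasso_eper (AP : finType) (pi : computation AP) : lasso pi -> eper pi.
Proof.
case=> u [w [wne H]]; exists (size u), (size w); split.
  by case: w wne H.
move=> n Kn; rewrite !H.
have -> : (n + size w < size u)%N = false by lia.
have -> : (n < size u)%N = false by lia.
have -> : (n + size w - size u = (n - size u) + size w)%N by lia.
by rewrite modnDr.
Qed.

Unset Implicit Arguments.
Local Open Scope ring_scope.

Theorem theorem1 (R : realType) (AP : finType) (D : set (nat -> R))
  (HD : forall eta, D eta -> discounting eta)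
  (phi : ltl R AP) (Hphi : in_disc D phi) (v : R) (Hv : 0 <= v <= 1) :
  exists (Q : finType) (A : aba {set AP} Q),
    weak A /\
    forall pi : computation AP,
      (v < value phi pi -> accepts A pi) /\
      (accepts A pi -> lasso pi -> v < value phi pi).
Proof.
have [L' [[Q [A [lab [rank [B [m [G E]]]]]]] [h1 h2]]] := (sand_value HD Hphi v).1.
exists Q, A; split; first exact: good_weak G.
move=> pi; split.
  by move=> hv; apply: (good_accepts G); apply/E; exact: h1.
move=> acc hl; have Ep := lasso_eper hl; apply: (h2 pi Ep); apply/E.
exact: (good_sound G Ep acc).
Qed.
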